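(* Assume $\hat\omega$ lies in the interior of $\mathbb{P}_\Omega$ (all $\hat\omega_i>0$). The vertex-direction iteration with step sizes $\alpha_n=1/(n+1)$, initialized at any $\omega^{(1)}\in\mathbb{P}_\Omega$, satisfies $$\|\omega^{(n)}-\hat\omega\|_{\mathbf K}^2\le 4R_*^2\Big(1+\frac{R_*^2}{\alpha_*^2}\Big)\frac1{n^2},\qquad n\ge1,$$ where $R_*=[\lambda_{\max}(\mathbf K)(1-1/\Omega)]^{1/2}$, $\alpha_*=w_*/L$, $w_*=\min_i\hat\omega_i$ and $L=(\max_i\{\mathbf K^{-1}\}_{ii})^{1/2}$.
   Context: $\mathbf K$ is a real symmetric positive definite $\Omega\times\Omega$ matrix ($\Omega\ge2$) with largest eigenvalue $\lambda_{\max}(\mathbf K)$; $\|u\|_{\mathbf K}^2=u^T\mathbf K u$. $e_i$ is the $i$-th canonical basis vector of $\mathbb{R}^\Omega$ and $\mathbb{P}_\Omega=\{\omega\in\mathbb{R}^\Omega:\omega_i\ge0,\sum_i\omega_i=1\}$. The vertex-direction iteration is $\omega^{(n+1)}=\omega^{(n)}+\alpha_n(e_{i_n^+}-\omega^{(n)})$ with $i_n^+\in\arg\min_{i=1,\dots,\Omega}e_i^T\mathbf K(\omega^{(n)}-\hat\omega)$. *)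

(* Defs.v *)
From HB Require Import structures.
From mathcomp Require Import all_boot all_order all_algebra.
Set Implicit Arguments. Unset Strict Implicit. Unset Printing Implicit Defensive.
Import Order.TTheory GRing.Theory Num.Theory.
Local Open Scope ring_scope.

Definition sym_posdef (R : realFieldType) (n : nat) (K : 'M[R]_n) : Prop :=
  K^T = K /\ forall u : 'cV[R]_n, u != 0 -> 0 < (u^T *m K *m u) 0 0.

Definition is_lambda_max (R : realFieldType) (n : nat) (K : 'M[R]_n) (l : R) : Prop :=
  eigenvalue K l /\ forall b, eigenvalue K b -> b <= l.

Definition normK2 (R : realFieldType) (n : nat) (K : 'M[R]_n) (u : 'cV[R]_n) : R :=
  (u^T *m K *m u) 0 0.

Definition in_simplex (R : realFieldType) (n : nat) (w : 'cV[R]_n) : Prop :=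
  (forall i, 0 <= w i 0) /\ \sum_i w i 0 = 1.

Definition e_vec (R : realFieldType) (n : nat) (i : 'I_n) : 'cV[R]_n := delta_mx i 0.

Definition min_coord (R : realFieldType) (n : nat) (u : 'cV[R]_n.+1) : R :=
  \big[Num.min/u ord0 0]_i u i 0.
Definition max_diag (R : realFieldType) (n : nat) (A : 'M[R]_n.+1) : R :=
  \big[Num.max/A ord0 ord0]_i A i i.

(* Main.v *)
Require Import Defs.
From HB Require Import structures.
From mathcomp Require Import all_boot all_order all_algebra.
From mathcomp Require Import complex ring lra.
Import Order.TTheory GRing.Theory Num.Theory.
Local Open Scope ring_scope.

Module Helpers.
Set Implicit Arguments. Unset Strict Implicit. Unset Printing Implicit Defensive.


Section Ray.
Variable R : rcfType.
Local Notation C := (R[i]).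
Local Notation f := (real_complex R).

Lemma fconj (x : R) : (f x)^* = f x.
Proof. apply: conj_Creal; apply/complex_realP; by exists x. Qed.

Lemma rayleigh n (K : 'M[R]_n) (l : R) : K^T = K ->
  (forall b, eigenvalue K b -> b <= l) ->
  forall u : 'rV[R]_n, (u *m K *m u^T) 0 0 <= l * (u *m u^T) 0 0.
Proof.
move=> KT Hl u.
pose A := map_mx f K.
have HAC : (A ^t* )%sesqui = A.
  apply/matrixP => i j; rewrite !mxE fconj; have := congr1 (fun M : 'M[R]_n => M i j) KT; rewrite mxE => ->; done.
have Aherm : A \is hermsymmx.
  by apply/is_hermitianmxP; rewrite expr0 scale1r HAC.
have /orthomx_spectralP Aeq := hermitian_normalmx Aherm.
have Pu := spectral_unitarymx A.
have Dreal := hermitian_spectral_diag_real Aherm.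
set P := spectralmx A in Aeq Pu.
set D := spectral_diag A in Aeq Dreal.
have PP : (P *m P^t* )%sesqui = 1%:M by apply/unitarymxP.
have PP' : (P^t* *m P)%sesqui = 1%:M by apply: mulmx1C.
have iP : invmx P = (P^t*)%sesqui by apply: invmx_unitary.
have Dk : forall k, exists2 a : R, D 0 k = f a & a <= l.
  move=> k; have /complex_realP [a Ea] := mxOverP Dreal 0 k.
  exists a => //; apply: Hl.
  suff : eigenvalue A (D 0 k).
    by rewrite Ea !eigenvalue_root_char -map_char_poly fmorph_root.
  apply/eigenvalueP.
  exists (row k P).
    have -> : row k P *m A = row k (P *m A) by rewrite row_mul.
    rewrite Aeq iP !mulmxA PP mul1mx row_mul row_diag_mx -scalemxAl -rowE //.
  apply/negP => /eqP H0.
  have := congr1 (row k) PP; rewrite row_mul H0 mul0mx => /rowP /(_ k).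
  by rewrite !mxE eqxx /= => /eqP; rewrite eq_sym oner_eq0.
pose x := map_mx f u.
have ex : (x^t* )%sesqui = map_mx f u^T.
  by apply/matrixP => i j; rewrite !mxE fconj.
pose y := x *m (P^t* )%sesqui.
have ey : (y^t* )%sesqui = P *m (x^t* )%sesqui.
  by rewrite /y trmx_mul map_mxM trmxCK.
have E1 : f ((u *m K *m u^T) 0 0) = (y *m diag_mx D *m (y^t* )%sesqui) 0 0.
  have -> : f ((u *m K *m u^T) 0 0) = (x *m A *m (x^t* )%sesqui) 0 0.
    by rewrite ex -!map_mxM [in RHS]mxE.
  by rewrite Aeq iP ey /y !mulmxA.
have E2 : f ((u *m u^T) 0 0) = (y *m (y^t* )%sesqui) 0 0.
  by rewrite ey /y -mulmxA (mulmxA _ P) PP' mul1mx ex -map_mxM [in RHS]mxE.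
rewrite -(lecR (R:=R)) rmorphM /= E1 E2.
rewrite mul_mx_diag !mxE mulr_sumr -subr_ge0 -sumrB; apply: sumr_ge0 => j _.
rewrite mxE.
have -> : (y^t* )%sesqui j 0 = (y 0 j)^* by rewrite !mxE.
move: (y 0 j) => z; have [a -> al] := Dk j.
have -> : z * f a * z^* = f a * (z * z^*) by rewrite mulrAC mulrC.
rewrite -mulrBl; apply: mulr_ge0.
  by rewrite subr_ge0 lecR.
by rewrite mul_conjC_ge0.
Qed.
End Ray.


Section Gen.
Variables (R : rcfType) (n : nat) (K : 'M[R]_n).
Hypothesis KT : K^T = K.
Hypothesis KP : forall u : 'cV[R]_n, u != 0 -> 0 < (u^T *m K *m u) 0 0.

Definition Bf (u v : 'cV[R]_n) := (u^T *m K *m v) 0 0.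

Lemma B_expand u v : Bf u v = \sum_j u j 0 * (K *m v) j 0.
Proof. by rewrite /Bf -mulmxA mxE; apply: eq_bigr => j _; rewrite mxE. Qed.

Lemma Bsym u v : Bf u v = Bf v u.
Proof.
rewrite /Bf (_ : u^T *m K *m v = (v^T *m K *m u)^T) ?mxE //.
by rewrite !trmx_mul trmxK KT mulmxA.
Qed.

Lemma BDr u v w : Bf u (v + w) = Bf u v + Bf u w.
Proof. by rewrite /Bf mulmxDr mxE. Qed.
Lemma BZr u a v : Bf u (a *: v) = a * Bf u v.
Proof. by rewrite /Bf -scalemxAr mxE. Qed.
Lemma BNr u v : Bf u (- v) = - Bf u v.
Proof. by rewrite -scaleN1r BZr mulN1r. Qed.
Lemma BBr u v w : Bf u (v - w) = Bf u v - Bf u w.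
Proof. by rewrite BDr BNr. Qed.
Lemma BDl u v w : Bf (v + w) u = Bf v u + Bf w u.
Proof. by rewrite Bsym BDr !(Bsym u). Qed.
Lemma BZl u a v : Bf (a *: v) u = a * Bf v u.
Proof. by rewrite Bsym BZr (Bsym u). Qed.
Lemma BBl u v w : Bf (v - w) u = Bf v u - Bf w u.
Proof. by rewrite Bsym BBr !(Bsym u). Qed.
Lemma B0r u : Bf u 0 = 0.
Proof. by rewrite /Bf mulmx0 mxE. Qed.

Lemma B_ge0 u : 0 <= Bf u u.
Proof.
have [->|/KP/ltW //] := eqVneq u 0; by rewrite B0r.
Qed.

Lemma CS u v : Bf u v ^+ 2 <= Bf u u * Bf v v.
Proof.
have [->|vn0] := eqVneq v 0; first by rewrite !B0r expr2 !mulr0.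
have bp : 0 < Bf v v := KP vn0.
set b := Bf v v; set c := Bf u v; set a := Bf u u.
have := B_ge0 (b *: u - c *: v).
rewrite BBl !BZl !BBr !BZr (Bsym v u) -/a -/b -/c => H.
have H2 : 0 <= b * (a * b - c ^+ 2).
  by move: H; congr (0 <= _); ring.
rewrite -subr_ge0; move: H2; rewrite pmulr_rge0 //.
Qed.

Lemma K_unit : K \in unitmx.
Proof.
rewrite unitmxE unitfE; apply/negP => /det0P [v vn0 vK].
have : v^T != 0 by rewrite -(inj_eq (@trmx_inj _ _ _)) trmxK trmx0.
move=> /KP; rewrite trmxK vK mul0mx mxE ltxx //.
Qed.

Lemma eKe (M : 'M[R]_n) (i j : 'I_n) : ((delta_mx i (0:'I_1))^T *m M *m delta_mx j (0:'I_1)) 0 0 = M i j.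
Proof. by rewrite trmx_delta -rowE -colE !mxE. Qed.

Lemma eK (M : 'cV[R]_n) (i : 'I_n) : ((delta_mx i (0:'I_1))^T *m M) 0 0 = M i 0.
Proof. by rewrite trmx_delta -rowE !mxE. Qed.

Lemma invK_diag j : (invmx K) j j = Bf (invmx K *m delta_mx j 0) (invmx K *m delta_mx j 0).
Proof.
rewrite /Bf trmx_mul trmx_inv KT !mulmxA mulmxKV ?K_unit //.
by rewrite -eKe.
Qed.

Lemma invK_diag_gt0 j : 0 < (invmx K) j j.
Proof.
rewrite invK_diag; apply: KP; apply/negP => /eqP H.
have : K *m (invmx K *m delta_mx j (0:'I_1)) = 0 by rewrite H mulmx0.
rewrite mulKVmx ?K_unit // => /matrixP /(_ j 0); rewrite !mxE !eqxx /=.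
by move/eqP; rewrite oner_eq0.
Qed.

Lemma coord_bound (d : 'cV[R]_n) j : d j 0 ^+ 2 <= (invmx K) j j * Bf d d.
Proof.
have -> : d j 0 = Bf (invmx K *m delta_mx j 0) d.
  by rewrite /Bf trmx_mul trmx_inv KT mulmxKV ?K_unit // eK.
by rewrite invK_diag; apply: CS.
Qed.
Lemma Bexp (D' D v : 'cV[R]_n) a b : a *: D' = b *: D + v ->
  a ^+ 2 * Bf D' D' = b ^+ 2 * Bf D D + 2 * b * Bf v D + Bf v v.
Proof.
move=> H; have := congr1 (fun u => Bf u u) H => /=.
rewrite !BZl !BZr !BDl !BDr !BZl !BZr (Bsym D v) => H2.
rewrite !expr2 -mulrA H2; ring.
Qed.
End Gen.

Section Gap.
Variables (R : rcfType) (n : nat) (K : 'M[R]_n).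
Hypothesis KT : K^T = K.
Hypothesis KP : forall u : 'cV[R]_n, u != 0 -> 0 < (u^T *m K *m u) 0 0.

Lemma gap (d w : 'cV[R]_n) (i0 : 'I_n) (ws L : R) :
  \sum_j d j 0 = 0 -> (forall j, ws <= w j 0) -> \sum_j w j 0 = 1 -> 0 < ws -> 0 < L ->
  (forall j, (invmx K) j j <= L ^+ 2) ->
  (forall j, (K *m d) i0 0 <= (K *m d) j 0) ->
  ws * Num.sqrt (Bf K d d) <= L * (Bf K w d - (K *m d) i0 0).
Proof.
move=> Hd Hwl Hw wsp Lp HL Hg.
set g := K *m d in Hg *.
set N := Bf K d d.
have N0 : 0 <= N by apply: B_ge0.
set t := Num.sqrt N.
have t0 : 0 <= t by apply: sqrtr_ge0.
have tt : t ^+ 2 = N by rewrite sqr_sqrtr.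
have G0 : g i0 0 <= Bf K w d.
  rewrite B_expand -/g.
  have -> : g i0 0 = \sum_j w j 0 * g i0 0 by rewrite -mulr_suml Hw mul1r.
  apply: ler_sum => j _; apply: ler_wpM2l => //.
  by apply: le_trans (Hwl j); apply: ltW.
have [t_eq0|tp] := eqVneq t 0.
  rewrite t_eq0 mulr0; apply: mulr_ge0; [exact: ltW | by rewrite subr_ge0].
have tp' : 0 < t by rewrite lt_def tp t0.
have dj : forall j, d j 0 <= L * t.
  move=> j; have H1 := coord_bound KT KP d j.
  have H2 : (invmx K) j j * N <= (L * t) ^+ 2.
    by rewrite exprMn tt; apply: ler_wpM2r.
  have H3 : d j 0 ^+ 2 <= (L * t) ^+ 2 := le_trans H1 H2.
  have Lt0 : 0 <= L * t by apply: mulr_ge0 => //; apply: ltW.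
  case: (lerP (d j 0) 0) => [dn|dpos]; first exact: le_trans dn Lt0.
  by rewrite -(ler_pXn2r (n := 2)) // ?nnegrE ltW.
have E : \sum_j (L * t * w j 0 - ws * d j 0) * g j 0 = L * t * Bf K w d - ws * N.
  rewrite /N !B_expand -/g !mulr_sumr -sumrB; apply: eq_bigr => j _; ring.
have F : \sum_j (L * t * w j 0 - ws * d j 0) * g i0 0 = L * t * g i0 0.
  rewrite -mulr_suml sumrB -!mulr_sumr Hd Hw; ring.
have I : \sum_j (L * t * w j 0 - ws * d j 0) * g i0 0 <=
         \sum_j (L * t * w j 0 - ws * d j 0) * g j 0.
  apply: ler_sum => j _; apply: ler_wpM2l => //.
  rewrite subr_ge0; apply: (@le_trans _ _ (ws * (L * t))).
    by apply: ler_wpM2l => //; apply: ltW.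
  rewrite mulrC; apply: ler_wpM2l; [by apply: mulr_ge0 => //; apply: ltW | exact: Hwl].
rewrite E F -tt in I.
nra.
Qed.
End Gap.

Section Extra.
Variables (R : rcfType) (n : nat).

Lemma simplex_dist (a b : 'cV[R]_n) :
  (forall j, 0 <= a j 0) -> \sum_j a j 0 = 1 ->
  (forall j, 0 <= b j 0) -> \sum_j b j 0 = 1 ->
  \sum_j (a j 0 - b j 0) ^+ 2 <= 2.
Proof.
move=> a0 a1 b0 b1.
have le1 : forall (c : 'cV[R]_n), (forall j, 0 <= c j 0) -> \sum_j c j 0 = 1 ->
    forall j, c j 0 <= 1.
  move=> c c0 c1 j; rewrite -c1 (bigD1 j) //= lerDl; apply: sumr_ge0 => i _; exact: c0.
apply: (@le_trans _ _ (\sum_j (a j 0 + b j 0))).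
  apply: ler_sum => j _.
  have := a0 j; have := b0 j; have := le1 a a0 a1 j; have := le1 b b0 b1 j.
  move=> h1 h2 h3 h4; nra.
by rewrite big_split /= a1 b1.
Qed.

Lemma sum_sq (v : 'cV[R]_n) : (v^T *m v) 0 0 = \sum_j v j 0 ^+ 2.
Proof. by rewrite mxE; apply: eq_bigr => j _; rewrite !mxE expr2. Qed.

Lemma rayleigh_col (K : 'M[R]_n) l : K^T = K ->
  (forall b, eigenvalue K b -> b <= l) ->
  forall v : 'cV[R]_n, (v^T *m K *m v) 0 0 <= l * (v^T *m v) 0 0.
Proof.
move=> KT Hl v; have := rayleigh KT Hl v^T; by rewrite trmxK.
Qed.
End Extra.

Lemma sum_delta (R : rcfType) n (i : 'I_n) : \sum_j (delta_mx i (0:'I_1) : 'cV[R]_n) j 0 = 1.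
Proof.
rewrite (bigD1 i) //= mxE !eqxx /= big1 ?addr0 // => j /negbTE ji.
by rewrite mxE ji.
Qed.

Lemma delta_ge0 (R : rcfType) n (i j : 'I_n) : 0 <= (delta_mx i (0:'I_1) : 'cV[R]_n) j 0.
Proof. by rewrite mxE ler0n. Qed.

Lemma csD (R : rcfType) n (A B : 'cV[R]_n) : \sum_j (A + B) j 0 = \sum_j A j 0 + \sum_j B j 0.
Proof. by rewrite -big_split; apply: eq_bigr => j _; rewrite mxE. Qed.
Lemma csB (R : rcfType) n (A B : 'cV[R]_n) : \sum_j (A - B) j 0 = \sum_j A j 0 - \sum_j B j 0.
Proof. by rewrite -sumrB; apply: eq_bigr => j _; rewrite !mxE. Qed.
Lemma csZ (R : rcfType) n a (A : 'cV[R]_n) : \sum_j (a *: A) j 0 = a * \sum_j A j 0.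
Proof. by rewrite mulr_sumr; apply: eq_bigr => j _; rewrite !mxE. Qed.

End Helpers.
Import Helpers.

(* Omega = m.+2 (i.e. Omega >= 2) *)
Theorem lemmaA3 (R : rcfType) (m : nat) (K : 'M[R]_m.+2) (lmax : R)
  (what : 'cV[R]_m.+2) (omega : nat -> 'cV[R]_m.+2) (idx : nat -> 'I_m.+2) :
  sym_posdef K ->
  is_lambda_max K lmax ->
  in_simplex what -> (forall i, 0 < what i 0) ->
  in_simplex (omega 1%N) ->
  (forall n, (1 <= n)%N ->
     forall j : 'I_m.+2,
       ((e_vec R (idx n))^T *m K *m (omega n - what)) 0 0 <=
       ((e_vec R j)^T *m K *m (omega n - what)) 0 0) ->
  (forall n, (1 <= n)%N ->
     omega n.+1 = omega n + (n.+1%:R)^-1 *: (e_vec R (idx n) - omega n)) ->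
  let Rstar := Num.sqrt (lmax * (1 - (m.+2%:R)^-1)) in
  let L := Num.sqrt (max_diag (invmx K)) in
  let alphastar := min_coord what / L in
  forall n, (1 <= n)%N ->
    normK2 K (omega n - what) <=
      4 * Rstar ^+ 2 * (1 + Rstar ^+ 2 / alphastar ^+ 2) / (n%:R ^+ 2).

Proof.
move=> [KT KP] [_ Hl] [what0 what1] wpos [om0 om1] Hidx Hrec Rstar L alphastar n n1.
pose d k := omega k - what.
pose e k := e_vec R (idx k).
have som : forall k, (1 <= k)%N -> \sum_j omega k j 0 = 1.
  elim=> [//|k IH] _; case: (posnP k) => [->|kp]; first exact: om1.
  rewrite Hrec //.
  by rewrite csD csZ csB IH // sum_delta subrr mulr0 addr0.
have sd : forall k, (1 <= k)%N -> \sum_j d k j 0 = 0.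
  by move=> k k1; rewrite csB som // what1 subrr.
have key : forall k, (1 <= k)%N ->
    k.+1%:R *: d k.+1 = k%:R *: d k + (e k - what).
  move=> k k1; apply/matrixP => i j; rewrite /d /e Hrec // !mxE.
  field; by rewrite addrC natr1 pnatr_eq0.
have KP' : forall u : 'cV[R]_m.+2, u != 0 -> 0 < (u^T *m K *m u) 0 0 := KP.
have BeD : forall k, Bf K (e k) (d k) = (K *m d k) (idx k) 0.
  by move=> k; rewrite /Bf /e /e_vec -mulmxA eK.
have Hg : forall k, (1 <= k)%N -> forall j, (K *m d k) (idx k) 0 <= (K *m d k) j 0.
  move=> k k1 j; have := Hidx k k1 j.
  by rewrite -!mulmxA /e_vec !eK.
pose G k := Bf K what (d k) - (K *m d k) (idx k) 0.
pose V k := Bf K (e k - what) (e k - what).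
have Qrec : forall k, (1 <= k)%N ->
   k.+1%:R ^+ 2 * Bf K (d k.+1) (d k.+1) =
   k%:R ^+ 2 * Bf K (d k) (d k) - 2 * k%:R * G k + V k.
  move=> k k1.
  rewrite (Bexp KT (key k k1)) (BBl KT (d k) (e k) what) BeD /G /V; ring.
have lpos : 0 <= lmax.
  have := rayleigh_col KT Hl (e_vec R (0 : 'I_m.+2)).
  rewrite /e_vec eKe eK mxE !eqxx mulr1 => H; apply: le_trans H; apply: ltW.
  have e0n : (delta_mx (0 : 'I_m.+2) (0 : 'I_1) : 'cV[R]_m.+2) != 0.
    apply/negP => /eqP/matrixP/(_ 0 0); rewrite !mxE !eqxx => /eqP.
    by rewrite oner_eq0.
  by have := KP' _ e0n; rewrite eKe.
set ws := min_coord what.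
have wsp : 0 < ws.
  rewrite /ws /min_coord; elim/big_ind: _ => //.
  by move=> x y xp yp; rewrite lt_min xp yp.
have wsl : forall j, ws <= what j 0 by move=> j; apply: bigmin_le.
set M := max_diag (invmx K).
have Ml : forall j, (invmx K) j j <= M by move=> j; rewrite /M /max_diag; exact: (@le_bigmax _ R _ _ (fun i => invmx K i i)).
have Mp : 0 < M by apply: lt_le_trans (invK_diag_gt0 KT KP' ord0) (Ml ord0).
have Lp : 0 < L by rewrite sqrtr_gt0.
have L2 : L ^+ 2 = M by rewrite sqr_sqrtr // ltW.
have ap : 0 < alphastar by rewrite divr_gt0.
have dist : forall a : 'cV[R]_m.+2, (forall j, 0 <= a j 0) -> \sum_j a j 0 = 1 ->
    Bf K (a - what) (a - what) <= 2 * lmax.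
  move=> a a0 a1; apply: le_trans (rayleigh_col KT Hl _) _.
  rewrite sum_sq mulrC; apply: ler_wpM2r => //.
  under eq_bigr => j _ do rewrite !mxE.
  exact: simplex_dist.
have Vb : forall k, V k <= 2 * lmax.
  by move=> k; apply: dist; [exact: delta_ge0 | exact: sum_delta].
have gp : forall k, (1 <= k)%N -> ws * Num.sqrt (Bf K (d k) (d k)) <= L * G k.
  move=> k k1; apply: (gap KT KP') => //.
  - exact: sd.

  - by move=> j; rewrite L2.
  - exact: Hg.
set C0 := 2 * lmax + (lmax / alphastar) ^+ 2.
have claim : forall k, (1 <= k)%N -> k%:R ^+ 2 * Bf K (d k) (d k) <= C0.
  move=> k0; elim: k0 => [//|k IH] _; case: (posnP k) => [->|kp].
    rewrite expr1n mul1r; apply: le_trans (dist _ om0 om1) _.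
    by rewrite /C0 lerDl sqr_ge0.
  have IHk := IH kp; rewrite Qrec //.
  set N := Bf K (d k) (d k) in IHk *.
  have N0 : 0 <= N by apply: B_ge0.
  set t := Num.sqrt N.
  have t0 : 0 <= t by apply: sqrtr_ge0.
  set q := k%:R * t.
  have q0 : 0 <= q by apply: mulr_ge0.
  have qq : k%:R ^+ 2 * N = q ^+ 2 by rewrite /q exprMn sqr_sqrtr.
  rewrite qq in IHk *.
  have Gk := gp k kp.
  have H1 : ws * t / L <= G k.
    rewrite ler_pdivrMr // [G k * L]mulrC; exact: Gk.
  have kG : alphastar * q <= k%:R * G k.
    have -> : alphastar * q = k%:R * (ws * t / L).
      rewrite /alphastar /q -/ws; ring.
    by apply: ler_wpM2l.
  have Vk := Vb k.
  have G0 : 0 <= alphastar * q by apply: mulr_ge0 => //; apply: ltW.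
  case: (lerP lmax (alphastar * q)) => [hl|hl].
    lra.
  have hq : q < lmax / alphastar by rewrite ltr_pdivlMr // mulrC.
  have hq2 : q ^+ 2 <= (lmax / alphastar) ^+ 2.
    by rewrite ler_pXn2r // ?nnegrE // ltW // (le_lt_trans q0 hq).
  rewrite /C0; lra.
have Hn := claim n n1.
change (Bf K (d n) (d n) <= 4 * Rstar ^+ 2 * (1 + Rstar ^+ 2 / alphastar ^+ 2) / n%:R ^+ 2).
set rho := lmax * (1 - (m.+2%:R)^-1).
have inv2 : (m.+2%:R : R)^-1 <= 2^-1.
  by rewrite lef_pV2 ?posrE ?ltr0n // ler_nat.
have rho2 : lmax / 2 <= rho.
  rewrite /rho; have -> : lmax / 2 = lmax * (1 - 2^-1) by field.
  by apply: ler_wpM2l => //; rewrite lerD2l lerN2.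
have rho0 : 0 <= rho by apply: le_trans rho2; apply: divr_ge0.
have RR : Rstar ^+ 2 = rho by rewrite /Rstar sqr_sqrtr.
rewrite RR.
have n0 : (0 : R) < n%:R ^+ 2 by rewrite exprn_gt0 // ltr0n.
rewrite ler_pdivlMr // mulrC.
apply: le_trans Hn _.
set b := (alphastar ^+ 2)^-1.
have b0 : 0 <= b by rewrite invr_ge0 sqr_ge0.
have -> : C0 = 2 * lmax + lmax ^+ 2 * b by rewrite /C0 expr_div_n.
have l2 : lmax ^+ 2 <= 4 * rho ^+ 2 by nra.
have l2b : lmax ^+ 2 * b <= 4 * rho ^+ 2 * b by apply: ler_wpM2r.
rewrite /b; set b' := (alphastar ^+ 2)^-1 in l2b *.
rewrite mulrDr mulr1 -/b'.
have -> : 4 * rho * (rho * b') = 4 * rho ^+ 2 * b' by ring.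
have h4 : lmax <= rho * 2 by rewrite -ler_pdivrMr.
rewrite /b' -/b; lra.
Qed.
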